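(* Let $X=(V,E,T)$ be an $(s,k,K)$-two layer system with weight function $w$. Let $A\subseteq E$ and $U\subseteq V$, and for $0\le i\le k$ let $A^i_U=\{\tau\in A:|U\cap\tau|=i\}$. Then $$\sum_{i=1}^k i\,w(A^i_U)\le\sum_{v\in U}m_v(A_v)\le (s-1)\sum_{i=1}^k i\,w(A^i_U).$$ In particular, for every $A\subseteq E$ and every $U\subseteq V$, $\sum_{v\in U}m_v(A_v)\le (s-1)k\,w(A)$.
   Context: Let $s,k,K$ be positive integers. An $(s,k,K)$-two layer system is a triple $X=(V,E,T)$ where: $V$ is a finite set; $E\subseteq 2^V$ with $|\tau|=k$ for every $\tau\in E$ and $\bigcup_{\tau\in E}\tau=V$; $T\subseteq 2^E$ with $|\sigma|=K$ for every $\sigma\in T$ and $\bigcup_{\sigma\in T}\sigma=E$. For $v\in V$, $\sigma\in T$ write $v\in\sigma$ if $v\in\tau$ for some $\tau\in\sigma$; it is required that $2\le|\{\tau\in\sigma:v\in\tau\}|\le s$ for all $\sigma\in T$, $v\in\sigma$. A positive function $w:T\to\mathbb{R}_{>0}$ is fixed and extended by $w(\tau)=\sum_{\sigma\in T,\tau\in\sigma}w(\sigma)$ ($\tau\in E$), $w(v)=\sum_{\sigma\in T,v\in\sigma}w(\sigma)$ ($v\in V$), $w(B)=\sum_{\eta\in B}w(\eta)$. For $v\in V$ let $E_v=\{\tau\in E:v\in\tau\}$. The link of $v$ is the graph with vertex set $E_v$ in which distinct $\tau_1,\tau_2\in E_v$ are adjacent iff some $\sigma\in T$ contains both, with edge weight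 $m_v(\{\tau_1,\tau_2\})=\sum_{\sigma\in T,\ \tau_1,\tau_2\in\sigma}w(\sigma)$; for $\tau\in E_v$, $m_v(\tau)$ is the sum of $m_v$ over the link edges containing $\tau$, and $m_v(B)=\sum_{\tau\in B}m_v(\tau)$ for $B\subseteq E_v$. For $A\subseteq E$, $A_v=A\cap E_v$. *)

(* Defs.v *)
From mathcomp Require Import all_boot all_order all_algebra.
Set Implicit Arguments. Unset Strict Implicit. Unset Printing Implicit Defensive.
Import Order.TTheory GRing.Theory Num.Theory.
Local Open Scope ring_scope.

Section TwoLayer.
Variables (V : finType) (R : realFieldType).

(* v \in sigma : v lies in some tau in sigma *)
Definition vin (v : V) (sigma : {set {set V}}) : bool :=
  [exists tau in sigma, v \in tau].

(* (s,k,K)-two layer system X = (V,E,T); V is the whole finite type V *)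
Definition two_layer (s k K : nat) (E : {set {set V}})
    (T : {set {set {set V}}}) : Prop :=
  [/\ (forall tau, tau \in E -> #|tau| = k),
      \bigcup_(tau in E) tau = [set: V],
      (forall sigma, sigma \in T -> #|sigma| = K),
      \bigcup_(sigma in T) sigma = E &
      (forall sigma v, sigma \in T -> vin v sigma ->
         (2 <= #|[set tau in sigma | v \in tau]| <= s)%N)].

Variables (T : {set {set {set V}}}) (w : {set {set V}} -> R).

Definition wE (tau : {set V}) : R := \sum_(sigma in T | tau \in sigma) w sigma.
Definition wset (B : {set {set V}}) : R := \sum_(tau in B) wE tau.

Definition Ev (E : {set {set V}}) (v : V) : {set {set V}} :=
  [set tau in E | v \in tau].

Definition mvedge (t1 t2 : {set V}) : R :=
  \sum_(sigma in T | (t1 \in sigma) && (t2 \in sigma)) w sigma.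

(* adjacency in the link of v (vertices are E_v) *)
Definition link_adj (t1 t2 : {set V}) : bool :=
  (t1 != t2) && [exists sigma in T, (t1 \in sigma) && (t2 \in sigma)].

Definition mv (E : {set {set V}}) (v : V) (tau : {set V}) : R :=
  \sum_(t in Ev E v | link_adj tau t) mvedge tau t.

Definition mvset (E : {set {set V}}) (v : V) (B : {set {set V}}) : R :=
  \sum_(tau in B) mv E v tau.

End TwoLayer.

Definition AiU (V : finType) (A : {set {set V}}) (U : {set V}) (i : nat) :=
  [set tau in A | #|U :&: tau| == i].

(* Main.v *)
Require Import Defs.
From mathcomp Require Import all_boot all_order all_algebra.
Import Order.TTheory GRing.Theory Num.Theory.
Local Open Scope ring_scope.

Lemma mv_eq (V : finType) (R : realFieldType) (E : {set {set V}})
  (T : {set {set {set V}}}) (w : {set {set V}} -> R)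
  (HE : \bigcup_(sigma in T) sigma = E) (v : V) (tau : {set V}) :
  v \in tau ->
  mv T w E v tau = \sum_(sigma in T | tau \in sigma)
      w sigma * (#|[set t in sigma | v \in t]| - 1)%:R.
Proof.
move=> Hv; rewrite /mv.
transitivity (\sum_(t in Ev E v | t != tau)
   \sum_(sigma in T | tau \in sigma) (if t \in sigma then w sigma else 0)).
  rewrite big_mkcond [RHS]big_mkcond; apply: eq_bigr => t _.
  have -> : mvedge T w tau t = \sum_(sigma in T | tau \in sigma) (if t \in sigma then w sigma else 0).
    rewrite /mvedge -big_mkcondr; apply: eq_bigl => s; by rewrite andbA.
  rewrite /link_adj eq_sym.
  case: (t \in Ev E v); rewrite /= ?if_same //; case: (t != tau); rewrite /= ?if_same //.
  case: existsP => [_|Hn]; rewrite /= ?if_same //.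
  rewrite big1 // => s /andP [sT ts]; case: ifP => // st.
  by exfalso; apply: Hn; exists s; rewrite sT ts st.
rewrite exchange_big; apply: eq_bigr => s /andP [sT ts].
rewrite -big_mkcondr.
rewrite (eq_bigl (mem ([set t in s | v \in t] :\ tau))); last first.
  move=> t; rewrite /= !inE.
  case st: (t \in s); rewrite ?andbF ?andbT //=.
  have tE : t \in E by rewrite -HE; apply/bigcupP; exists s.
  by rewrite tE /= andbC.
rewrite sumr_const mulr_natr; congr (_ *+ _).
rewrite [in RHS](cardsD1 tau) !inE ts Hv /=.
by rewrite add1n subn1.
Qed.

Lemma mv_bounds (V : finType) (R : realFieldType) (s : nat) (E : {set {set V}})
  (T : {set {set {set V}}}) (w : {set {set V}} -> R)
  (HE : \bigcup_(sigma in T) sigma = E)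
  (Hs : forall sigma v, sigma \in T -> vin v sigma ->
         (2 <= #|[set tau in sigma | v \in tau]| <= s)%N)
  (Hw : forall sigma, sigma \in T -> 0 < w sigma) (v : V) (tau : {set V}) :
  v \in tau ->
  wE T w tau <= mv T w E v tau /\ mv T w E v tau <= (s - 1)%:R * wE T w tau.
Proof.
move=> Hv; rewrite mv_eq // /wE; split.
  apply: ler_sum => sg /andP [sT ts].
  have Hvin : vin v sg by apply/existsP; exists tau; rewrite ts Hv.
  case/andP: (Hs sg v sT Hvin) => H2 _.
  by rewrite -[X in X <= _]mulr1 ler_pM2l ?Hw // ler1n subn_gt0.
rewrite mulr_sumr; apply: ler_sum => sg /andP [sT ts].
have Hvin : vin v sg by apply/existsP; exists tau; rewrite ts Hv.
case/andP: (Hs sg v sT Hvin) => _ H2.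
by rewrite [X in _ <= X]mulrC ler_pM2l ?Hw // ler_nat leq_sub2r.
Qed.

Lemma wE_ge0 (V : finType) (R : realFieldType) (T : {set {set {set V}}}) (w : {set {set V}} -> R)
  (Hw : forall sigma, sigma \in T -> 0 < w sigma) tau : 0 <= wE T w tau.
Proof. by apply: sumr_ge0 => sg /andP [sT _]; apply: ltW; apply: Hw. Qed.

Lemma sum_layers (V : finType) (R : realFieldType) (k : nat) (A : {set {set V}}) (U : {set V})
  (F : {set V} -> R) : (forall tau, tau \in A -> #|U :&: tau| <= k)%N ->
  \sum_(1 <= i < k.+1) i%:R * (\sum_(tau in AiU A U i) F tau)
  = \sum_(tau in A) #|U :&: tau|%:R * F tau.
Proof.
move=> Hk.
under eq_bigr => i _ do rewrite mulr_sumr.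
transitivity (\sum_(1 <= i < k.+1) \sum_(tau in A)
   (if #|U :&: tau| == i then i%:R * F tau else 0)).
  apply: eq_bigr => i _; rewrite big_mkcond [RHS]big_mkcond /=.
  by apply: eq_bigr => tau _; rewrite /AiU !inE; case: (tau \in A).
rewrite exchange_big; apply: eq_bigr => tau tA.
have := Hk tau tA; set n := #|U :&: tau| => Hn.
case: (posnP n) => [->|n0].
  by rewrite mul0r big1_seq // => i; rewrite mem_index_iota; case: i.
rewrite (bigD1_seq n) /= ?eqxx ?iota_uniq ?mem_index_iota ?n0 ?ltnS //.
rewrite big1 ?addr0 // => i ni; by rewrite eq_sym (negbTE ni).
Qed.

Theorem proposition2p9 (V : finType) (R : realFieldType) (s k K : nat)
    (E : {set {set V}}) (T : {set {set {set V}}}) (w : {set {set V}} -> R) :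
  (0 < s)%N -> (0 < k)%N -> (0 < K)%N ->
  two_layer s k K E T ->
  (forall sigma, sigma \in T -> 0 < w sigma) ->
  forall (A : {set {set V}}) (U : {set V}), A \subset E ->
  [/\ \sum_(1 <= i < k.+1) i%:R * wset T w (AiU A U i)
        <= \sum_(v in U) mvset T w E v (A :&: Ev E v),
      \sum_(v in U) mvset T w E v (A :&: Ev E v)
        <= (s - 1)%:R * \sum_(1 <= i < k.+1) i%:R * wset T w (AiU A U i) &
      \sum_(v in U) mvset T w E v (A :&: Ev E v)
        <= (s - 1)%:R * k%:R * wset T w A].
Proof.
move=> s0 k0 K0 [HEk Hcov HK HE Hs] Hw A U AE.
have Hkk : forall tau, tau \in A -> (#|U :&: tau| <= k)%N.
  by move=> tau tA; rewrite -(HEk tau (subsetP AE _ tA)); apply: subset_leq_card; apply: subsetIr.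
have HS : \sum_(1 <= i < k.+1) i%:R * wset T w (AiU A U i)
    = \sum_(tau in A) #|U :&: tau|%:R * wE T w tau.
  exact: (@sum_layers V R k A U (wE T w) Hkk).
have HM : \sum_(v in U) mvset T w E v (A :&: Ev E v)
    = \sum_(v in U) \sum_(tau in A | v \in tau) mv T w E v tau.
  apply: eq_bigr => v _; rewrite /mvset; apply: eq_bigl => tau.
  rewrite !inE; case tA: (tau \in A) => //=.
  by rewrite (subsetP AE _ tA).
have HL : forall G : {set V} -> R,
    \sum_(tau in A) #|U :&: tau|%:R * G tau
    = \sum_(v in U) \sum_(tau in A | v \in tau) G tau.
  move=> G.
  under [RHS]eq_bigr => v _ do rewrite big_mkcondr /=.
  rewrite exchange_big; apply: eq_bigr => tau _.
  rewrite -big_mkcondr /= (eq_bigl (mem (U :&: tau))); last first.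
    by move=> v; rewrite /= !inE.
  by rewrite sumr_const mulr_natl.
have Hb := @mv_bounds V R s E T w HE Hs Hw.
have H2 : \sum_(v in U) mvset T w E v (A :&: Ev E v)
        <= (s - 1)%:R * \sum_(1 <= i < k.+1) i%:R * wset T w (AiU A U i).
  rewrite HS HL HM mulr_sumr; apply: ler_sum => v _.
  rewrite mulr_sumr; apply: ler_sum => tau /andP [_ vt].
  exact: (Hb v tau vt).2.
split => //.
  rewrite HS HL HM; apply: ler_sum => v _; apply: ler_sum => tau /andP [_ vt].
  exact: (Hb v tau vt).1.
apply: (le_trans H2); rewrite -mulrA; apply: ler_wpM2l; first exact: ler0n.
rewrite HS /wset mulr_sumr; apply: ler_sum => tau tA.
by apply: ler_wpM2r; [exact: wE_ge0 | rewrite ler_nat Hkk].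
Qed.
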